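(* Let $m\ge2$ and let $r\ge0$ be the integer with $2^r\,\|\,m+1$. Then for every $a\in\{1,2,\dots,m\}$, $a$ is periodic under $f_2$ (i.e. $f_2^t(a)=a$ for some $t\ge1$) if and only if $2^r\,\|\,a$. Equivalently, the union of all fixed sets $K(x)\ne\{0\}$ of the two-digit base-$m$ Kaprekar map equals $\{a(m-1):1\le a\le m,\ 2^r\,\|\,a\}$.
   Context: For an integer $m\ge2$, $X=\{0,1,\dots,m^2-1\}$, each element written with exactly two base-$m$ digits (leading zeros allowed), and $f(x)=D(x)-A(x)$ is the two-digit base-$m$ Kaprekar map ($D(x)$, $A(x)$: digits of $x$ in nonincreasing, resp. nondecreasing, order). The map $f_2:\{0,\dots,m\}\to\{0,\dots,m\}$ is defined by $f(a(m-1))=f_2(a)(m-1)$; explicitly $f_2(0)=0$ and $f_2(a)=|2a-m-1|$ for $1\le a\le m$. For integers $r\ge0$ and $N\neq0$, $2^r\,\|\,N$ means $2^r\mid N$ and $2^{r+1}\nmid N$. The fixed set of $x$ is $K(x)=\{f^{S(x)+i}(x):0\le i<T(x)\}$, where $S(x)$ is the least $s\ge0$ with $f^{s+t}(x)=f^s(x)$ for some $t\ge1$ and $T(x)$ the least such $t$ for $s=S(x)$. *)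

(* Defs.v *)
From mathcomp Require Import all_boot.
Set Implicit Arguments. Unset Strict Implicit. Unset Printing Implicit Defensive.

Definition exact_pow2 (r N : nat) : Prop := (2 ^ r %| N) /\ ~~ (2 ^ r.+1 %| N).

(* Two-digit base-m Kaprekar map on X = {0,...,m^2-1}: digits x %/ m and x %% m;
   D = larger digit first, A = smaller digit first, f x = D - A. *)
Definition kap (m x : nat) : nat :=
  let d1 := x %/ m in let d0 := x %% m in
  (maxn d1 d0 * m + minn d1 d0) - (minn d1 d0 * m + maxn d1 d0).

(* f_2(0) = 0, f_2(a) = |2a - m - 1| for a >= 1 (nat absolute difference). *)
Definition f2 (m a : nat) : nat :=
  if a == 0 then 0 else (a.*2 - m.+1) + (m.+1 - a.*2).

(* y belongs to the fixed set K(x) = { f^(S(x)+i)(x) : 0 <= i < T(x) }, where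
   S(x) is the least s admitting t >= 1 with f^(s+t) x = f^s x, and T(x) is the
   least such t for s = S(x). *)
Definition inK (m x y : nat) : Prop :=
  exists s t,
    [/\ 0 < t /\ iter (s + t) (kap m) x = iter s (kap m) x,
        (forall s' t', 0 < t' -> iter (s' + t') (kap m) x = iter s' (kap m) x -> s <= s'),
        (forall t', 0 < t' -> iter (s + t') (kap m) x = iter s (kap m) x -> t <= t')
      & exists2 i, i < t & y = iter (s + i) (kap m) x].

(* Main.v *)
Require Import Defs.
From mathcomp Require Import all_boot zify.
Set Implicit Arguments. Unset Strict Implicit. Unset Printing Implicit Defensive.

Lemma f2_lia m a : 1 <= a -> f2 m a = (a.*2 - m.+1) + (m.+1 - a.*2).
Proof. by rewrite /f2; case: a. Qed.

Lemma exactE r x : exact_pow2 r x <-> exists2 x', x = 2^r * x' & odd x'.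
Proof.
split.
- case=> /dvdnP [q ->] nd; exists q; first by rewrite mulnC.
  apply/negPn/negP => /negbTE eo; move: nd; rewrite (expnS 2 r) dvdn_pmul2r ?expn_gt0 //.
  by rewrite dvdn2 eo.
- case=> q -> oq; split; first by rewrite dvdn_mulr.
  by rewrite (expnS 2 r) (mulnC (2^r)) dvdn_pmul2r ?expn_gt0 // dvdn2 oq.
Qed.

Lemma exact_pos r x : exact_pow2 r x -> 1 <= x.
Proof. by case: x => // [[_]]; rewrite dvdn0. Qed.

Lemma f2_struct m r x c n' : 1 <= x -> x.*2 = 2^r * c -> ~~ odd c ->
  m.+1 = 2^r * n' -> odd n' -> exact_pow2 r (f2 m x).
Proof.
move=> x1 e1 oc e2 on; apply/exactE.
exists ((c - n') + (n' - c)).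
  by rewrite f2_lia // mulnDr !mulnBr -e1 -e2.
case: (leqP c n') => h.
- have -> : c - n' = 0 by lia. by rewrite add0n oddB // on (negbTE oc).
- have -> : n' - c = 0 by lia. by rewrite addn0 oddB ?(ltnW h) // on (negbTE oc).
Qed.

Lemma f2_S m r x : exact_pow2 r m.+1 -> exact_pow2 r x -> exact_pow2 r (f2 m x).
Proof.
move=> /exactE [n' e2 on] hx; have x1 := @exact_pos r x hx; move: hx => /exactE [x' e1 ox].
apply: (f2_struct (c := x'.*2) x1 _ _ e2 on).
- by rewrite e1 -!muln2 mulnA.
- by rewrite odd_double.
Qed.

Lemma f2_S2 m r x : exact_pow2 r m.+1 -> 2^r.+1 %| x -> 1 <= x -> exact_pow2 r (f2 m x).
Proof.
move=> /exactE [n' e2 on] /dvdnP [q e1] x1.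
apply: (f2_struct (c := (q.*2).*2) x1 _ _ e2 on).
- by rewrite e1 expnS -!muln2; lia.
- by rewrite odd_double.
Qed.


Lemma f2_inj m r x y : exact_pow2 r m.+1 -> exact_pow2 r x -> exact_pow2 r y ->
  f2 m x = f2 m y -> x = y.
Proof.
move=> hn hx hy.
have x1 := @exact_pos r x hx; have y1 := exact_pos hy.
rewrite !f2_lia // => e.
have [//|hs] : x = y \/ x + y = m.+1 by lia.
move: hn hx hy => /exactE [n' e2 on] /exactE [x' e1 ox] /exactE [y' e3 oy].
move: hs; rewrite e1 e3 e2 -mulnDr => /eqP; rewrite eqn_pmul2l ?expn_gt0 // => /eqP ee.
by move: on; rewrite -ee oddD ox oy.
Qed.

Lemma f2_le m a : a <= m -> f2 m a <= m.
Proof. rewrite /f2; case: a => //= a h; lia. Qed.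

Lemma dvd_ladder m r b k : exact_pow2 r m.+1 -> k <= r -> 2^k %| iter k (f2 m) b.
Proof.
move=> [hn _]; elim: k => [|k IH] hk /=; first by rewrite expn0 dvd1n.
have /dvdnP [q e] := IH (ltnW hk).
have hkn : 2^k.+1 %| m.+1 by apply: dvdn_trans hn; rewrite dvdn_exp2l.
case z0: (iter k (f2 m) b) => [|z]; first by rewrite /f2 /= dvdn0.
rewrite f2_lia // -z0 e.
have hd : 2^k.+1 %| (q * 2^k).*2 by rewrite expnS -muln2; apply/dvdnP; exists q; lia.
by rewrite dvdn_add // dvdn_sub.
Qed.

Lemma S_iter m r a k : exact_pow2 r m.+1 -> exact_pow2 r a -> a <= m ->
  exact_pow2 r (iter k (f2 m) a) /\ iter k (f2 m) a <= m.
Proof.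
move=> hn ha am; elim: k => [|k [IH1 IH2]] //=.
by split; [apply: f2_S | apply: f2_le].
Qed.

Lemma iter_mul (T : Type) (f : T -> T) t x k : iter t f x = x -> iter (t * k) f x = x.
Proof.
move=> h; elim: k => [|k IH]; first by rewrite muln0.
by rewrite mulnS iterD IH h.
Qed.

Lemma part1 m r a : 2 <= m -> exact_pow2 r m.+1 -> 1 <= a <= m ->
  ((exists2 t, 0 < t & iter t (f2 m) a = a) <-> exact_pow2 r a).
Proof.
move=> m2 hn /andP [a1 am]; split.
- case=> t t0 ht.
  have hr : 2^r %| a.
    rewrite -{1}(iter_mul r ht) (_ : t * r = r + (t * r - r)); last first.
      by rewrite subnKC // leq_pmull.
    by rewrite iterD; apply: (dvd_ladder _ hn).
  case: (boolP (2^r.+1 %| a)) => h2; last by split.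
  have hf := f2_S2 hn h2 a1.
  have [H _] := S_iter (t.-1) hn hf (f2_le am).
  by move: H; rewrite -iterSr prednK // ht.
- move=> ha.
  pose s := [seq iter i (f2 m) a | i <- iota 0 m.+1].
  have nu : ~~ uniq s.
    apply/negP => u.
    suff : size s <= size (iota 1 m) by rewrite size_map !size_iota ltnn.
    apply: (uniq_leq_size u) => x /mapP [i _ ->].
    have [H1 H2] := S_iter i hn ha am.
    by rewrite mem_iota (exact_pos H1) /= add1n ltnS.
  have [i [j [ij js e]]] := uniqPn 0 nu.
  move: js e; rewrite size_map size_iota => js.
  rewrite !(nth_map 0) ?size_iota ?(ltn_trans ij) // !nth_iota ?(ltn_trans ij) // !add0n.
  exists (j - i); first by rewrite subn_gt0.
  rewrite (_ : j = (j - i) + i) in e; last by rewrite subnK // ltnW.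
  move: (j - i) e => d; clear ij js.
  elim: i => [|i IH] e; first by rewrite addn0 in e.
  apply: IH; rewrite addnS /= in e.
  by apply: (f2_inj hn) e; apply: (S_iter _ hn ha am).1.
Qed.

Lemma kap_dig m d1 d0 : d1 < m -> d0 < m ->
  kap m (d1*m+d0) = ((d1-d0)+(d0-d1))*(m-1).
Proof.
move=> h1 h0; have m0 : 0 < m by lia.
rewrite /kap divnMDl // divn_small // addn0 modnMDl modn_small //.
set M := maxn _ _; set N := minn _ _.
case: (leqP d1 d0) => h.
- have -> : M = d0 by rewrite /M; lia. have -> : N = d1 by rewrite /N; lia. nia.
- have -> : M = d1 by rewrite /M; lia. have -> : N = d0 by rewrite /N; lia. nia.
Qed.

Lemma kap_form m x : 1 <= m -> x < m ^ 2 -> exists2 c, c <= m - 1 & kap m x = c * (m - 1).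
Proof.
move=> m1 xm; rewrite (divn_eq x m) kap_dig ?ltn_pmod //; last by rewrite ltn_divLR // mulnn.
exists ((x %/ m - x %% m) + (x %% m - x %/ m)) => //.
have h1 : x %/ m < m by rewrite ltn_divLR // mulnn.
have h2 : x %% m < m by rewrite ltn_pmod.
move: h1 h2; move: (x %/ m) (x %% m) => u v; lia.
Qed.

Lemma iter_lt m x k : 1 <= m -> x < m ^ 2 -> iter k (kap m) x < m ^ 2.
Proof.
move=> m1 xm; elim: k => [|k IH] //=.
have [c cm ->] := kap_form m1 IH.
rewrite -mulnn; nia.
Qed.

Lemma kap_a m a : 1 <= m -> a <= m -> kap m (a * (m - 1)) = f2 m a * (m - 1).
Proof.
move=> m1 am; case: a am => [|a] am.
  by rewrite mul0n (_ : 0 = 0 * m + 0) // kap_dig.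
rewrite (_ : a.+1 * (m - 1) = a * m + (m - a.+1)); last by nia.
rewrite kap_dig ?f2_lia //; try lia.
congr (_ * _); lia.
Qed.

Lemma kap_iter m a k : 1 <= m -> a <= m -> iter k (kap m) (a * (m - 1)) = iter k (f2 m) a * (m - 1).
Proof.
move=> m1 am; elim: k => [|k IH] //=.
rewrite IH kap_a //.
elim: k {IH} => [|k IH] //=; exact: f2_le.
Qed.

Definition good m x s t :=
  [/\ 0 < t /\ iter (s + t) (kap m) x = iter s (kap m) x,
      (forall s' t', 0 < t' -> iter (s' + t') (kap m) x = iter s' (kap m) x -> s <= s')
    & (forall t', 0 < t' -> iter (s + t') (kap m) x = iter s (kap m) x -> t <= t')].

Lemma good_uniq m x s t s2 t2 : good m x s t -> good m x s2 t2 -> s = s2 /\ t = t2.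
Proof.
move=> [[t0 p] ms mt] [[t20 p2] ms2 mt2].
have Es : s = s2.
  by apply/eqP; rewrite eqn_leq (ms _ _ t20 p2) (ms2 _ _ t0 p).
move: p2 mt2; rewrite -Es => p2 mt2; split => //.
by apply/eqP; rewrite eqn_leq (mt _ t20 p2) (mt2 _ t0 p).
Qed.

Lemma per_mul m x s t k : iter (s + t) (kap m) x = iter s (kap m) x ->
  iter (s + t * k) (kap m) x = iter s (kap m) x.
Proof.
move=> p; rewrite addnC iterD iter_mul //.
by rewrite -iterD addnC.
Qed.

Theorem lemma3p4p1 (m r : nat) :
  2 <= m -> exact_pow2 r m.+1 ->
  (forall a, 1 <= a <= m ->
     ((exists2 t, 0 < t & iter t (f2 m) a = a) <-> exact_pow2 r a))
  /\
  (forall y,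
     (exists x, [/\ x < m ^ 2, ~ (forall z, inK m x z <-> z = 0) & inK m x y])
     <-> (exists a, [/\ 1 <= a <= m, exact_pow2 r a & y = a * (m - 1)])).
Proof.
move=> m2 hn; have m1 : 1 <= m by lia.
split; first by move=> a ha; apply: part1.
move=> y; split.
- case=> x [xm nK hy].
  have hy' := hy; case: hy' => s [t [[t0 p] ms mt [i it ey]]].
  have yper : iter t (kap m) y = y.
    rewrite ey -iterD (_ : t + (s + i) = i + (s + t)); last by lia.
    by rewrite iterD p -iterD addnC.
  have ylt : y < m ^ 2 by rewrite ey; apply: iter_lt.
  have [c cm ec] : exists2 c, c <= m - 1 & y = c * (m - 1).
    rewrite -yper -(prednK t0) /=; apply: kap_form => //; exact: iter_lt.
  have cle : c <= m by lia.
  have cper : iter t (f2 m) c = c.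
    apply/eqP; rewrite -(eqn_pmul2r (_ : 0 < m - 1)); last by lia.
    by rewrite -kap_iter // -ec yper ec.
  case: c cm ec cle cper => [|c] cm ec cle cper.
    exfalso; apply: nK => z; split; last by move=> ->; rewrite ec mul0n in hy.
    case=> s2 [t2 [c1 c2 c3 [i2 it2 ez]]].
    have [Es Et] := good_uniq (And3 (conj t0 p) ms mt) (And3 c1 c2 c3).
    subst s2 t2.
    have y0 : iter (s + i) (kap m) x = 0 by rewrite -ey ec.
    have k0 : forall k, iter k (kap m) 0 = 0.
      elim=> [|k IH] //=; rewrite IH (_ : 0 = 0 * m + 0) // kap_dig //; lia.
    rewrite ez addnC iterD -(per_mul i p) -iterD.
    have -> : i2 + (s + t * i) = (t * i + i2 - i) + (s + i).
      have : i <= t * i by rewrite leq_pmull.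
      lia.
    by rewrite iterD y0 k0.
  have hc : 1 <= c.+1 <= m by apply/andP; split.
  exists c.+1; split => //.
  by apply: (part1 m2 hn hc).1; exists t.
- case=> a [ha hr ey].
  have [t t0 ht] := (part1 m2 hn ha).2 hr.
  move: ha => /andP [a1 am].
  have yper : iter t (kap m) y = y by rewrite ey kap_iter // ht.
  have yP : exists n, (0 < n) && (iter n (kap m) y == y) by exists t; rewrite t0 yper eqxx.
  case: (ex_minnP yP) => T /andP [T0 /eqP TP] Tmin.
  have hin : inK m y y.
    exists 0, T; split.
    + by split.
    + by [].
    + by move=> t' t'0 e; apply: Tmin; rewrite t'0 /= e eqxx.
    + by exists 0.
  exists y; split => //.
  + rewrite ey -mulnn; nia.
  + move=> H; have := (H y).1 hin; rewrite ey; nia.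
Qed.
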